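(* Let $R\subseteq\{0,1\}^V$ be a relation that is not closed under joins (there exist $x,y\in R$ with $x\vee y\notin R$), but such that every pinning $R_p$ with $\mathrm{dom}(p)\ne\emptyset$ is closed under joins. Then there is a configuration $x$ with $R=\{\mathbf 0,x,\overline x\}$ or $R=\{x,\overline x\}$.
   Context: $x\vee y$ is the coordinatewise maximum. A partial configuration $p$ of $V$ is an element of $\{0,1\}^{\mathrm{dom}(p)}$ with $\mathrm{dom}(p)\subseteq V$; the pinning $R_p\subseteq\{0,1\}^{V\setminus\mathrm{dom}(p)}$ is $\{x:(x,p)\in R\}$. $\mathbf 0$ is the all-zero configuration and $\overline x_i=1-x_i$. *)

(* Defs.v *)
From mathcomp Require Import all_boot.
Set Implicit Arguments. Unset Strict Implicit. Unset Printing Implicit Defensive.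

Definition config (T : finType) := {ffun T -> bool}.

Definition cjoin (T : finType) (x y : config T) : config T :=
  [ffun i => x i || y i].
Definition ccompl (T : finType) (x : config T) : config T :=
  [ffun i => ~~ x i].
Definition czero (T : finType) : config T := [ffun => false].

Definition join_closed (T : finType) (R : {set config T}) : Prop :=
  forall x y, x \in R -> y \in R -> cjoin x y \in R.

(* A partial configuration p of V: p v = Some b if v \in dom(p) with value b,
   p v = None if v \notin dom(p). *)
Definition pconfig (V : finType) := {ffun V -> option bool}.
Definition pdom (V : finType) (p : pconfig V) : {set V} :=
  [set v | p v != None].

Definition free_vars (V : finType) (p : pconfig V) : finType :=
  {v : V | p v == None}.

(* (x, p) : the full configuration obtained by combining x and p *)
Definition glue (V : finType) (p : pconfig V) (x : config (free_vars p))
  : config V :=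
  [ffun v => if insub v is Some s then x s else odflt false (p v)].

Definition pinning (V : finType) (R : {set config V}) (p : pconfig V)
  : {set config (free_vars p)} :=
  [set x | glue x \in R].

(* Main.v *)
Require Import Defs.
From mathcomp Require Import all_boot.

Lemma glue_restr (V : finType) (p : pconfig V) (x : config V) :
  (forall u b, p u = Some b -> x u = b) ->
  glue [ffun s : free_vars p => x (val s)] = x.
Proof.
move=> H; apply/ffunP => u; rewrite !ffunE.
case: insubP => [s _ <-|]; first by rewrite ffunE.
case E: (p u) => [b|] //= _; by rewrite (H _ _ E).
Qed.

Lemma bad_compl (V : finType) (R : {set config V}) :
  (forall p : pconfig V, pdom p != set0 -> join_closed (pinning R p)) ->
  forall x y, x \in R -> y \in R -> cjoin x y \notin R -> y = ccompl x.
Proof.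
move=> HP x y xR yR jR; apply/ffunP => v; rewrite ffunE.
case Exy: (x v == y v); last by move: Exy; case: (x v); case: (y v).
move/eqP: Exy => Exy; exfalso; move/negP: jR; apply.
pose p : pconfig V := [ffun u => if u == v then Some (x v) else None].
have Hd : pdom p != set0.
  by apply/set0Pn; exists v; rewrite inE ffunE eqxx.
have Hp : forall (z : config V), z v = x v -> forall u b, p u = Some b -> z u = b.
  move=> z zv u b; rewrite ffunE; case: eqP => // -> [<-]; exact zv.
have := HP p Hd [ffun s : free_vars p => x (val s)] [ffun s : free_vars p => y (val s)].
rewrite !inE !glue_restr; try (by apply: Hp); try (by apply: Hp; rewrite -Exy).
have -> : cjoin [ffun s : free_vars p => x (val s)] [ffun s : free_vars p => y (val s)]
  = [ffun s : free_vars p => cjoin x y (val s)].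
  by apply/ffunP => s; rewrite !ffunE.
rewrite glue_restr; first by apply.
by apply: Hp; rewrite ffunE -Exy orbb.
Qed.

Lemma ccomplK (V : finType) (x : config V) : ccompl (ccompl x) = x.
Proof. by apply/ffunP => v; rewrite !ffunE negbK. Qed.

Theorem mainTheorem9 (V : finType) (R : {set config V}) :
  ~ join_closed R ->
  (forall p : pconfig V, pdom p != set0 -> join_closed (pinning R p)) ->
  exists x : config V,
    R = [set czero V; x; ccompl x] \/ R = [set x; ccompl x].
Proof.
move=> HnJ HP.
case: (boolP [exists x, exists y, [&& x \in R, y \in R & cjoin x y \notin R]]);
  last first.
  move/negP => H; exfalso; apply: HnJ => x y xR yR.
  apply/negPn/negP => jR; apply: H; apply/existsP; exists x; apply/existsP; exists y.
  by rewrite xR yR jR.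
case/existsP => x /existsP [y /and3P [xR yR jR]].
have Ey := @bad_compl _ _ HP _ _ xR yR jR; subst y.
have Hz : forall z, z \in R -> z = czero V \/ z = x \/ z = ccompl x.
  move=> z zR.
  case: (eqVneq z x) => [->|zx]; first by right; left.
  case: (eqVneq z (ccompl x)) => [->|zcx]; first by right; right.
  left.
  have h1 : cjoin z x \in R.
    apply/negPn/negP => h; move: zcx; by rewrite (@bad_compl _ _ HP _ _ zR xR h) ccomplK eqxx.
  have h2 : cjoin z (ccompl x) \in R.
    apply/negPn/negP => h; move: zx.
    by rewrite -[z]ccomplK -(@bad_compl _ _ HP _ _ zR yR h) ccomplK eqxx.
  have h3 : cjoin (cjoin z x) (cjoin z (ccompl x)) \notin R.
    have -> : cjoin (cjoin z x) (cjoin z (ccompl x)) = cjoin x (ccompl x).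
      apply/ffunP => v; rewrite !ffunE; by case: (z v); case: (x v).
    exact jR.
  have E := @bad_compl _ _ HP _ _ h1 h2 h3.
  apply/ffunP => v; move/ffunP: E => /(_ v); rewrite !ffunE.
  by case: (z v); case: (x v).
case: (boolP (czero V \in R)) => z0; exists x; [left|right];
  apply/setP => w; rewrite !inE;
  (apply/idP/idP; [move=> wR; case: (Hz _ wR) => [E|[E|E]]; subst w; rewrite ?eqxx ?orbT //; by rewrite wR in z0|]).
- by move=> /orP [/orP [] |] /eqP ->.
- by case/orP => /eqP ->.
Qed.
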